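(* Let $\ell\ge 2$ and let $u,v$ be vertices of $CK(2,\ell)$. The imprints $im(u)$ and $im(v)$ contain the same number of $+$ signs and the same number of $-$ signs if and only if $v$ can be obtained from $u$ by a finite sequence of the following operations: (i) rotation, replacing $a_1a_2\ldots a_\ell$ by $a_2\ldots a_\ell a_1$; (ii) valid swap, replacing a single symbol $a_i$ by a symbol of $\{0,1,2\}$ different from both cyclic neighbours $a_{i-1}$ and $a_{i+1}$ (indices modulo $\ell$).
   Context: $CK(2,\ell)$ has as vertices all sequences $a_1\ldots a_\ell\in\{0,1,2\}^\ell$ with $a_i\neq a_{i+1}$ for $1\le i\le\ell-1$ and $a_1\ne a_\ell$, and an arc from $a_1\ldots a_\ell$ to $b_1\ldots b_\ell$ iff both are vertices and $b_i=a_{i+1}$ for $1\le i\le \ell-1$. For distinct $a,b\in\{0,1,2\}$ define $sgn(0,1)=sgn(1,2)=sgn(2,0)=+$ and $sgn(1,0)=sgn(2,1)=sgn(0,2)=-$. The imprint of a vertex $v=v_1\ldots v_\ell$ is the sequence $im(v)=(sgn(v_1,v_2),sgn(v_2,v_3),\dots,sgn(v_{\ell-1},v_\ell),sgn(v_\ell,v_1))$ of length $\ell$. *)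

(* Defs.v *)
From Stdlib Require Import Relations.
From mathcomp Require Import all_boot.
Set Implicit Arguments. Unset Strict Implicit. Unset Printing Implicit Defensive.

(* Symbols {0,1,2} are 'I_3; a word a_1..a_l is a seq 'I_3 (0-indexed). *)
Definition nxt (l i : nat) : nat := i.+1 %% l.
Definition prv (l i : nat) : nat := (i + l).-1 %% l.

(* Vertices of CK(2,l): words of length l with cyclically adjacent symbols distinct
   (for l >= 2 this is exactly a_i <> a_{i+1}, 1<=i<=l-1, and a_1 <> a_l). *)
Definition is_vertex (l : nat) (s : seq 'I_3) : bool :=
  (size s == l) &&
  [forall i : 'I_l, nth ord0 s i != nth ord0 s (nxt l i)].

(* sgn(a,b) = + (true) iff b = a+1 mod 3, i.e. (0,1),(1,2),(2,0). *)
Definition sgn (a b : 'I_3) : bool := (val b == (val a).+1 %% 3).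

Definition imprint (s : seq 'I_3) : seq bool :=
  [seq sgn (nth ord0 s i) (nth ord0 s (nxt (size s) i)) | i <- iota 0 (size s)].

Definition nplus (s : seq 'I_3) : nat := count (fun b : bool => b) (imprint s).
Definition nminus (s : seq 'I_3) : nat := count (fun b : bool => ~~ b) (imprint s).

Inductive op_step (l : nat) (u : seq 'I_3) : seq 'I_3 -> Prop :=
  | op_rot : op_step l u (rot 1 u)
  | op_swap (i : nat) (c : 'I_3) :
      i < l ->
      c != nth ord0 u (prv l i) ->
      c != nth ord0 u (nxt l i) ->
      op_step l u (set_nth ord0 u i c).

Definition reachable (l : nat) : relation (seq 'I_3) :=
  clos_refl_trans (seq 'I_3) (op_step l).

(* Main.v *)
Require Import Defs.
From Stdlib Require Import Relations.
From mathcomp Require Import all_boot zify.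

Lemma fin_inv (a b c e : 'I_3) : a != b -> b != e -> c != a -> c != e ->
  sgn a c + sgn c e = sgn a b + sgn b e.
Proof.
by case: a => [[|[|[|?]]] ?]; case: b => [[|[|[|?]]] ?]; case: c => [[|[|[|?]]] ?];
   case: e => [[|[|[|?]]] ?].
Qed.

Lemma fin_det (a b b' : 'I_3) : a != b -> a != b' -> sgn a b = sgn a b' -> b = b'.
Proof.
case: a => [[|[|[|?]]] ?]; case: b => [[|[|[|?]]] ?]; case: b' => [[|[|[|?]]] ?] //= _ _ _;
 by apply/val_inj.
Qed.

Definition D (l : nat) (s : seq 'I_3) (j : nat) : bool :=
  sgn (nth ord0 s j) (nth ord0 s (nxt l j)).

Lemma nplusE s : nplus s = \sum_(i < size s) D (size s) s i.
Proof.
rewrite /nplus /imprint count_map -sum1_count big_mkcond /=.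
rewrite -(big_mkord xpredT (fun i => (D (size s) s i : nat))) /index_iota subn0.
by apply: eq_bigr => i _; rewrite /D; case: ifP.
Qed.

Lemma ordS_neq l (i : 'I_l) : 1 < l -> ordS i != i.
Proof.
move=> l2; apply/eqP => /(congr1 val) /=.
case: (ltnP i.+1 l) => h.
  by rewrite modn_small // => /esym/n_Sn.
have -> : i.+1 = l by apply/eqP; rewrite eqn_leq h ltn_ord.
by rewrite modnn => E; move: h l2; rewrite -E; lia.
Qed.

Lemma nth_rot1 (s : seq 'I_3) j : j < size s ->
  nth ord0 (rot 1 s) j = nth ord0 s (nxt (size s) j).
Proof.
case: s => [|x s] //= Hj; rewrite rot1_cons nth_rcons /nxt.
case: (ltnP j (size s)) => h.
  by rewrite modn_small.
have -> : j = size s by apply/eqP; rewrite eqn_leq h -ltnS Hj.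
by rewrite eqxx modnn.
Qed.

Lemma D_rot (s : seq 'I_3) (i : 'I_(size s)) :
  D (size s) (rot 1 s) i = D (size s) s (ordS i).
Proof.
rewrite /D !nth_rot1 //; last by rewrite /nxt ltn_pmod // (leq_ltn_trans _ (ltn_ord i)).
Qed.

Lemma rot_nplus s : nplus (rot 1 s) = nplus s.
Proof.
rewrite !nplusE size_rot [RHS](reindex_inj (@ordS_inj _)).
by apply: eq_bigr => i _; rewrite D_rot.
Qed.

Lemma vertexP l s : is_vertex l s ->
  size s = l /\ forall i : 'I_l, nth ord0 s i != nth ord0 s (ordS i).
Proof. by case/andP => /eqP -> /forallP. Qed.

Lemma rot_vertex l s : is_vertex l s -> is_vertex l (rot 1 s).
Proof.
case/vertexP => Hs H; apply/andP; split; first by rewrite size_rot Hs.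
apply/forallP => i; move: (H (ordS i)); subst l.
by rewrite !nth_rot1 // /nxt ltn_pmod // (leq_ltn_trans _ (ltn_ord i)).
Qed.

Section Swap.
Variables (l : nat) (s : seq 'I_3) (I : 'I_l) (c : 'I_3).
Hypothesis l2 : 1 < l.
Hypothesis Hs : size s = l.
Let w := set_nth ord0 s I c.

Lemma nth_w (j : nat) : nth ord0 w j = if j == I then c else nth ord0 s j.
Proof. by rewrite /w nth_set_nth. Qed.

Lemma nth_wo (j : 'I_l) : nth ord0 w j = if j == I then c else nth ord0 s j.
Proof. exact: nth_w. Qed.

Lemma size_w : size w = l.
Proof. by rewrite /w size_set_nth Hs; apply/maxn_idPr; exact: ltn_ord. Qed.

Lemma ordS_eq (j : 'I_l) : (ordS j == I) = (j == ord_pred I).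
Proof.
apply/eqP/eqP => [<-|->]; first by rewrite ordSK.
by rewrite ord_predK.
Qed.

Lemma W1 (j : 'I_l) : j != I -> j != ord_pred I -> D l w j = D l s j.
Proof.
move=> h1 h2; rewrite /D /nxt -[_ %% l]/(val (ordS j)) !nth_wo (negbTE h1).
have : (ordS j != I) by rewrite ordS_eq.
by move=> /negbTE ->.
Qed.

Lemma W2 : D l w I = sgn c (nth ord0 s (ordS I)).
Proof.
rewrite /D /nxt -[_ %% l]/(val (ordS I)) !nth_wo eqxx.
by rewrite (negbTE (@ordS_neq _ I l2)).
Qed.

Lemma pred_neq : ord_pred I != I.
Proof. by apply/negP => /eqP E; move: (@ordS_neq _ (ord_pred I) l2); rewrite ord_predK E eqxx. Qed.

Lemma W3 : D l w (ord_pred I) = sgn (nth ord0 s (ord_pred I)) c.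
Proof.
rewrite /D /nxt -[_ %% l]/(val (ordS (ord_pred I))) !nth_wo ord_predK eqxx.
by rewrite (negbTE pred_neq).
Qed.

Hypothesis Hv : forall i : 'I_l, nth ord0 s i != nth ord0 s (ordS i).
Hypothesis c1 : c != nth ord0 s (ord_pred I).
Hypothesis c2 : c != nth ord0 s (ordS I).

Lemma swap_nplus : nplus w = nplus s.
Proof.
rewrite !nplusE size_w Hs (bigD1 I) // [RHS](bigD1 I) //=.
rewrite (bigD1 (ord_pred I)) ?pred_neq // [X in _ = _ + X](bigD1 (ord_pred I)) ?pred_neq //=.
rewrite W2 W3 !addnA [X in X + _ = _]addnC.
have -> : D l s I + D l s (ord_pred I) = D l s (ord_pred I) + D l s I by rewrite addnC.
congr (_ + _); last by apply: eq_bigr => j /andP [h1 h2]; rewrite W1.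
rewrite /D /nxt -[(ord_pred I).+1 %% l]/(val (ordS (ord_pred I))) ord_predK.
rewrite (@fin_inv _ (nth ord0 s I)) //.
by move: (Hv (ord_pred I)); rewrite ord_predK.
Qed.

Lemma swap_vertex : is_vertex l w.
Proof.
apply/andP; split; first by rewrite size_w.
apply/forallP => j; rewrite /nxt -[_ %% l]/(val (ordS j)) !nth_wo.
rewrite ordS_eq; case: (eqVneq j I) => [->|hj].
  by rewrite [I == _]eq_sym (negbTE pred_neq).
case: ifP => [/eqP ->|_]; last exact: Hv.
by rewrite eq_sym.
Qed.

End Swap.

Lemma size_imprint s : size (imprint s) = size s.
Proof. by rewrite /imprint size_map size_iota. Qed.

Lemma nth_imprint s j : j < size s -> nth false (imprint s) j = D (size s) s j.
Proof. by move=> h; rewrite /imprint (nth_map 0) ?size_iota // nth_iota. Qed.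

Lemma nminusE s : nminus s = size s - nplus s.
Proof.
rewrite /nminus /nplus -(size_imprint s) -(count_predC id (imprint s)).
by rewrite addKn.
Qed.

Lemma rot_reach l s k : k <= size s -> reachable l s (rot k s).
Proof.
elim: k => [|k IH] h; first by rewrite rot0; apply: rt_refl.
rewrite rotS //; apply: rt_trans (IH (ltnW h)) _; apply: rt_step; exact: op_rot.
Qed.

Lemma step_inv l u w : 1 < l -> is_vertex l u -> op_step l u w ->
  [/\ is_vertex l w, nplus w = nplus u & reachable l w u].
Proof.
move=> l2 Vu; have [Hs Hv] := @vertexP _ _ Vu.
case=> [|i c Hi c1 c2].
- split; [exact: rot_vertex | exact: rot_nplus |].
  have {2}-> : u = rot (l.-1) (rot 1 u).
    rewrite -rotD; last by rewrite Hs addn1 (ltn_predK l2).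
    by rewrite addn1 (ltn_predK l2) -Hs rot_size.
  by apply: rot_reach; rewrite size_rot Hs leq_pred.
- pose I := Ordinal Hi.
  have E : set_nth ord0 u i c = set_nth ord0 u I c by [].
  rewrite E; split.
  + exact: (@swap_vertex l u I c l2 Hs Hv c1 c2).
  + exact: (@swap_nplus l u I c l2 Hs Hv c1 c2).
  + have {2}-> : u = set_nth ord0 (set_nth ord0 u I c) i (nth ord0 u i).
      apply: (@eq_from_nth _ ord0).
        by rewrite !size_set_nth Hs /I /= !(maxn_idPr Hi).
      move=> j _; rewrite !nth_set_nth /=.
      by case: (eqVneq j i) => [->|h] //; rewrite nth_set_nth /I /= (negbTE h).
    apply: rt_step; apply: op_swap => //.
    * rewrite nth_set_nth /= -[prv l i]/(val (ord_pred I)).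
      have -> : (val (ord_pred I) == i) = (ord_pred I == I) by [].
      rewrite (negbTE (@pred_neq l I l2)).
      by move: (Hv (ord_pred I)); rewrite ord_predK eq_sym.
    * rewrite nth_set_nth /= -[nxt l i]/(val (ordS I)).
      have -> : (val (ordS I) == i) = (ordS I == I) by [].
      rewrite (negbTE (@ordS_neq l I l2)).
      exact: (Hv I).
Qed.

Lemma reach_inv l u v : 1 < l -> reachable l u v -> is_vertex l u ->
  [/\ is_vertex l v, nplus v = nplus u & reachable l v u].
Proof.
move=> l2; elim=> {u v} [u v st|u|u v w _ IH1 _ IH2] Vu.
- exact: step_inv.
- by split => //; apply: rt_refl.
- have [Vv E1 R1] := IH1 Vu; have [Vw E2 R2] := IH2 Vv.
  split => //; first by rewrite E2 E1.
  exact: rt_trans R2 R1.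
Qed.

Fixpoint inv (d : seq bool) : nat :=
  if d is b :: d' then (if b then 0 else count id d') + inv d' else 0.

Lemma inv_cat x y : inv (x ++ y) = inv x + inv y + count negb x * count id y.
Proof.
elim: x => [|b x IH] /=; first by rewrite mul0n addn0.
rewrite IH count_cat; case: b => /=; nia.
Qed.

Lemma inv_swap x y : inv (x ++ true :: false :: y) < inv (x ++ false :: true :: y).
Proof. rewrite !inv_cat /=; lia. Qed.

Lemma inv0 d : inv d = 0 -> d = nseq (count id d) true ++ nseq (size d - count id d) false.
Proof.
elim: d => [|b d IH] //=; case: b => /= h.
  by rewrite subSS -IH.
have h1 : count id d = 0 by lia.
have h2 : inv d = 0 by lia.
rewrite h1 /=; congr (_ :: _); rewrite {1}(IH h2) h1 subn0 //.
Qed.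

Lemma inv_pos d : 0 < inv d -> exists x y, d = x ++ false :: true :: y.
Proof.
elim: d => [|b d IH] //= h.
case: (posnP (inv d)) => h0; last first.
  by have [x [y ->]] := IH h0; exists (b :: x), y.
move: h; rewrite h0 addn0; case: b => // hc.
rewrite (@inv0 _ h0); move: hc; case: (count id d) => // n _.
by exists [::], (nseq n true ++ nseq (size d - n.+1) false).
Qed.

Lemma fin_step (a b e : 'I_3) : a != b -> b != e -> sgn a b = false -> sgn b e = true ->
  [&& ordS a != a, ordS a != e, sgn a (ordS a) & ~~ sgn (ordS a) e].
Proof.
by case: a => [[|[|[|?]]] ?]; case: b => [[|[|[|?]]] ?]; case: e => [[|[|[|?]]] ?].
Qed.

Lemma nth_cat2 (x y : seq bool) p q p' q' j : j != size x -> j != (size x).+1 ->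
  nth false (x ++ p :: q :: y) j = nth false (x ++ p' :: q' :: y) j.
Proof.
move=> h1 h2; rewrite !nth_cat; case: ltnP => // h.
have : 1 < j - size x by lia.
by case E: (j - size x) => [|[|k]].
Qed.

Lemma sort_step l w x y : 1 < l -> is_vertex l w -> imprint w = x ++ false :: true :: y ->
  exists w', [/\ op_step l w w', imprint w' = x ++ true :: false :: y
                 & nth ord0 w' 0 = nth ord0 w 0].
Proof.
move=> l2 Vw Ew; have [Hs Hv] := @vertexP _ _ Vw.
have Hl : size x + 2 + size y = l.
  by rewrite -Hs -size_imprint Ew size_cat /=; lia.
have Hx : size x < l by lia.
have Hi : (size x).+1 < l by lia.
pose I := Ordinal Hi; pose J := Ordinal Hx.
have nI : nxt l (size x) = (size x).+1 by rewrite /nxt modn_small.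
have pI : prv l (size x).+1 = size x.
  by rewrite /prv addSn /= modnDr modn_small.
have Da : D l w (size x) = false.
  by rewrite -Hs -nth_imprint ?Hs // Ew nth_cat ltnn subnn.
have Db : D l w (size x).+1 = true.
  by rewrite -Hs -nth_imprint ?Hs // Ew nth_cat ltnNge leqnSn /= subSn // subnn.
have Vab := Hv J; have Vbe := Hv I.
rewrite /= -[_.+1 %% l]/(nxt l (size x)) nI in Vab.
rewrite /= -[_.+2 %% l]/(nxt l (size x).+1) in Vbe.
rewrite /D nI in Da; rewrite /D in Db.
have /and4P [c1 c2 c3 c4] := @fin_step _ _ _ Vab Vbe Da Db.
set a := nth ord0 w (size x) in Da Vab c1 c3.
set e := nth ord0 w (nxt l (size x).+1) in Db Vbe c2 c4.
exists (set_nth ord0 w I (ordS a)); split.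
- apply: op_swap => //; first by rewrite pI.
- have Sw := @size_w l w I (ordS a) Hs.
  apply: (@eq_from_nth _ false); first by rewrite size_imprint Sw size_cat /=; lia.
  rewrite size_imprint Sw => j Hj; rewrite nth_imprint Sw //.
  pose K := Ordinal Hj.
  have vP : val (ord_pred I) = size x by exact: pI.
  case: (eqVneq j (size x)) => [Ej|nj1].
    have -> : j = ord_pred I by rewrite vP.
    rewrite (@W3 l w I (ordS a) l2) vP c3 nth_cat ltnn subnn //.
  case: (eqVneq j (size x).+1) => [Ej|nj2].
    have -> : j = I by [].
    rewrite (@W2 l w I (ordS a) l2).
    rewrite -[nat_of_ord (ordS I)]/(nxt l (size x).+1).
    by rewrite (negbTE c4) nth_cat ltnNge leqnSn /= subSn // subnn.
  have -> : j = K by [].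
  rewrite (@W1 l w I (ordS a) K).
  + by rewrite /= -Hs -nth_imprint ?Hs // Ew; apply: nth_cat2.
  + by apply/negP => /eqP /(congr1 val) /= E; rewrite E eqxx in nj2.
  + by apply/negP => /eqP /(congr1 val); rewrite vP /= => E; rewrite E eqxx in nj1.
- by rewrite nth_set_nth.
Qed.

Lemma sort_ex l w : 1 < l -> is_vertex l w -> exists w',
  [/\ reachable l w w', is_vertex l w', nth ord0 w' 0 = nth ord0 w 0, nplus w' = nplus w
    & imprint w' = nseq (nplus w) true ++ nseq (l - nplus w) false].
Proof.
move=> l2; have [n Hn] : exists n, inv (imprint w) < n by exists (inv (imprint w)).+1.
elim: n w Hn => // n IH w Hn Vw.
have [Hs _] := @vertexP _ _ Vw.
case: (posnP (inv (imprint w))) => h.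
  exists w; split => //; first exact: rt_refl.
  by rewrite {1}(@inv0 _ h) size_imprint Hs.
have [x [y Ew]] := @inv_pos _ h.
have [w1 [st Ew1 H1]] := @sort_step _ _ _ _ l2 Vw Ew.
have [V1 P1 _] := @step_inv _ _ _ l2 Vw st.
have Hn1 : inv (imprint w1) < n.
  by rewrite Ew1; rewrite Ew in Hn; have := inv_swap x y; lia.
have [w' [R' V' H' P' I']] := IH w1 Hn1 V1.
exists w'; split => //.
- exact: rt_trans (rt_step _ _ _ _ st) R'.
- by rewrite H'.
- by rewrite P'.
- by rewrite I' P1.
Qed.

Lemma uniq_vertex l v1 v2 : 1 < l -> is_vertex l v1 -> is_vertex l v2 ->
  imprint v1 = imprint v2 -> nth ord0 v1 0 = nth ord0 v2 0 -> v1 = v2.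
Proof.
move=> l2 V1 V2 Ei E0.
have [Hs1 Hv1] := @vertexP _ _ V1; have [Hs2 Hv2] := @vertexP _ _ V2.
apply: (@eq_from_nth _ ord0); first by rewrite Hs1 Hs2.
suff H : forall j, j < l -> nth ord0 v1 j = nth ord0 v2 j by rewrite Hs1.
elim=> [//|j IH] hj.
have hj' : j < l by apply: ltnW.
have D1 : D l v1 j = D l v2 j.
  by rewrite -{1}Hs1 -nth_imprint ?Hs1 // Ei nth_imprint Hs2.
have nj : nxt l j = j.+1 by rewrite /nxt modn_small.
rewrite /D nj (IH hj') in D1.
have a1 := Hv1 (Ordinal hj'); have a2 := Hv2 (Ordinal hj').
rewrite /= -[_.+1 %% l]/(nxt l j) nj in a1 a2.
rewrite (IH hj') in a1.
exact: @fin_det _ _ _ a1 a2 D1.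
Qed.

Lemma fin_cover (a b1 b2 t : 'I_3) : a != b1 -> b1 != b2 -> sgn b1 b2 = sgn a b1 ->
  [|| t == a, t == b1 | t == b2].
Proof.
by case: a => [[|[|[|?]]] ?]; case: b1 => [[|[|[|?]]] ?]; case: b2 => [[|[|[|?]]] ?];
   case: t => [[|[|[|?]]] ?].
Qed.

Lemma head_facts l t : 1 < l -> is_vertex l t ->
  imprint t = nseq (nplus t) true ++ nseq (l - nplus t) false ->
  nth ord0 t 0 != nth ord0 t 1 /\ sgn (nth ord0 t 0) (nth ord0 t 1) = (0 < nplus t).
Proof.
move=> l2 Vt It; have [Hs Hv] := @vertexP _ _ Vt.
have l0 : 0 < l by apply: ltnW.
have n1 : nxt l 0 = 1 by rewrite /nxt modn_small.
split.
  by have := Hv (Ordinal l0); rewrite /= -[1 %% l]/(nxt l 0) n1.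
have := @nth_imprint t 0; rewrite Hs => /(_ l0); rewrite /D n1 => <-.
rewrite It nth_cat size_nseq; case: (nplus t) => [|p] //=.
rewrite subn0 nth_nseq l0 //.
Qed.

Lemma shift l t : 1 < l -> is_vertex l t ->
  imprint t = nseq (nplus t) true ++ nseq (l - nplus t) false ->
  exists t', [/\ reachable l t t', is_vertex l t', nplus t' = nplus t,
    imprint t' = nseq (nplus t) true ++ nseq (l - nplus t) false
    & nth ord0 t' 0 = nth ord0 t 1].
Proof.
move=> l2 Vt It; have [Hs Hv] := @vertexP _ _ Vt.
have Vr := @rot_vertex _ _ Vt.
have [t' [R' V' H' P' I']] := @sort_ex _ _ l2 Vr.
exists t'; split => //.
- exact: rt_trans (rt_step _ _ _ _ (op_rot _ _)) R'.
- by rewrite P' rot_nplus.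
- by rewrite I' rot_nplus.
- rewrite H' nth_rot1 Hs ?(ltnW l2) //; congr nth.
  by rewrite /nxt modn_small.
Qed.

Theorem lemma4 (l : nat) (u v : seq 'I_3) :
  2 <= l -> is_vertex l u -> is_vertex l v ->
  ((nplus u = nplus v /\ nminus u = nminus v) <-> reachable l u v).
Proof.
move=> l2 Vu Vv; have [Hsu _] := @vertexP _ _ Vu; have [Hsv _] := @vertexP _ _ Vv.
split.
- case=> Ep _.
  have [su [Ru Vsu Hsu' Psu Isu]] := @sort_ex _ _ l2 Vu.
  have [sv [Rv Vsv Hsv' Psv Isv]] := @sort_ex _ _ l2 Vv.
  have [_ _ Rsv] := @reach_inv _ _ _ l2 Rv Vv.
  have Isu' : imprint su = nseq (nplus su) true ++ nseq (l - nplus su) false by rewrite Psu.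
  have [t1 [R1 V1 P1 I1 H1]] := @shift _ _ l2 Vsu Isu'.
  have I1' : imprint t1 = nseq (nplus t1) true ++ nseq (l - nplus t1) false by rewrite P1.
  have [t2 [R2 V2 P2 I2 H2]] := @shift _ _ l2 V1 I1'.
  have [f1 g1] := @head_facts _ _ l2 Vsu Isu'.
  have [f2 g2] := @head_facts _ _ l2 V1 I1'.
  rewrite -H1 in f1 g1; rewrite -H2 in f2; rewrite -H2 P1 -g1 in g2.
  suff [X [RX VX IX HX]] : exists X, [/\ reachable l su X, is_vertex l X,
      imprint X = imprint sv & nth ord0 X 0 = nth ord0 sv 0].
    apply: rt_trans Ru _; apply: rt_trans RX _.
    by rewrite (@uniq_vertex _ _ _ l2 VX Vsv IX HX).
  have Isv' : imprint sv = imprint su by rewrite Isv Isu Ep.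
  have := @fin_cover _ _ _ (nth ord0 sv 0) f1 f2 g2.
  case/or3P => /eqP E.
  + by exists su; split => //; apply: rt_refl.
  + by exists t1; split => //; rewrite I1 Isv Psu Ep.
  + exists t2; split => //; first exact: rt_trans R1 R2.
    by rewrite I2 P1 Isv Psu Ep.
- move=> R; have [_ Ep _] := @reach_inv _ _ _ l2 R Vu.
  by rewrite !nminusE Hsu Hsv Ep.
Qed.
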